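(* Let $q,\hat q$ be exponential factors in distinct Galois orbits, with common part $q_c$ and fission exponent $f_{q,\hat q}$. Then the set of nonzero values among $\mathrm{slope}(\sigma^i(q)-\sigma^j(\hat q))$, $0\le i<\mathrm{ram}(q)$, $0\le j<\mathrm{ram}(\hat q)$, equals $\mathrm{Levels}(q_c)\sqcup\{f_{q,\hat q}\}$. Moreover, if $q,\hat q$ are compatible, then the function $(i,j)\mapsto\mathrm{slope}(\sigma^i(q)-\sigma^j(\hat q))$ on $\mathbb Z\times\mathbb Z$ is determined by $\mathrm{Levels}(q_c)$ and $f_{q,\hat q}$: if $q',\hat q'$ is another compatible pair in distinct orbits with $\mathrm{Levels}(q'_c)=\mathrm{Levels}(q_c)$ and $f_{q',\hat q'}=f_{q,\hat q}$, then $\mathrm{slope}(\sigma^i(q')-\sigma^j(\hat q'))=\mathrm{slope}(\sigma^i(q)-\sigma^j(\hat q))$ for all $i,j\in\mathbb Z$.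
   Context: Exponential factors: finite sums $q=\sum_ka_kx^k$, $a_k\in\mathbb C$, $k\in\mathbb Q_{>0}$; $E(q)$ = set of exponents with $a_k\ne0$; $\mathrm{slope}(q)=\max E(q)$ ($0$ if $q=0$); $\mathrm{ram}(q)$ = least $r\ge1$ with $q\in x^{1/r}\mathbb C[x^{1/r}]$. Galois operator $\sigma(\sum a_kx^k)=\sum a_ke^{-2\pi\sqrt{-1}k}x^k$; the Galois orbit (Stokes circle) $\langle q\rangle=\{\sigma^i(q)\}$ has $\mathrm{ram}(q)$ elements. Truncation $\tau_k(\sum a_{k'}x^{k'})=\sum_{k'\ge k}a_{k'}x^{k'}$. $\mathrm{Levels}(q)=\{\mathrm{slope}(q-\sigma^i(q)):i\in\mathbb Z\}\setminus\{0\}$. Common part and fission exponent: for $q,\hat q$ in distinct Galois orbits, if some $k\in E(q)$ satisfies $\langle\tau_k(q)\rangle=\langle\tau_k(\hat q)\rangle$, let $k$ be the smallest such and set $q_c=\tau_k(q)$, $\hat q_c=\tau_k(\hat q)$; otherwise $q_c=\hat q_c=0$. The fission exponent is $f_{q,\hat q}=\max(\mathrm{slope}(q-q_c),\mathrm{slope}(\hat q-\hat q_c))$. The pair is compatible if $q_c=\hat q_c$. *)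

(* Defs.v *)
From HB Require Import structures.
From mathcomp Require Import all_boot all_order all_algebra.
From mathcomp Require Import finmap.
From mathcomp Require Import complex.
From mathcomp Require Import boolp classical_sets reals trigo.

Set Implicit Arguments.
Unset Strict Implicit.
Unset Printing Implicit Defensive.

Import Order.TTheory GRing.Theory Num.Theory.
Local Open Scope ring_scope.
Local Open Scope classical_set_scope.

Section ExpFactors.
Variable R : realType.

(* An exponential factor q = sum_k a_k x^k is encoded by its finitely supported
   coefficient function k |-> a_k (k : rat, a_k : R[i] = C when R is the reals). *)
Definition expf := {fsfun rat -> R[i] with 0}.

Definition is_expfactor (q : expf) : Prop := forall k, k \in finsupp q -> 0 < k.

(* slope(q) = max E(q), and 0 if q = 0 (all exponents being positive) *)
Definition slope (q : expf) : rat := \big[Num.max/0]_(k <- finsupp q) k.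

Definition subf (q q' : expf) : expf :=
  [fsfun k in fsetU (finsupp q) (finsupp q') => q k - q' k | 0].

Definition zerof : expf := [fsfun for fun _ => 0].

Definition expi (t : R) : R[i] := Complex (cos t) (sin t).

Definition sigma (q : expf) : expf :=
  [fsfun k in finsupp q => expi (- (2 * pi * ratr k)) * q k | 0].
Definition sigma_inv (q : expf) : expf :=
  [fsfun k in finsupp q => expi (2 * pi * ratr k) * q k | 0].

Definition sigmaz (i : int) (q : expf) : expf :=
  match i with
  | Posz n => iter n sigma q
  | Negz n => iter n.+1 sigma_inv q
  end.

Definition galois_orbit (q : expf) : set expf := range (fun i : int => sigmaz i q).

(* r satisfies q in x^{1/r} C[x^{1/r}]: every exponent is a positive multiple of 1/r *)
Definition ramification_ok (q : expf) (r : nat) : bool :=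
  (0 < r)%N && all (fun k => (0 < k) && ((k * r%:R) \is a Num.int)) (finsupp q).

Definition ramification (q : expf) : nat :=
  match pselect (exists r, ramification_ok q r) with
  | left h => ex_minn h
  | right _ => 1%N
  end.

Definition tau (k : rat) (q : expf) : expf :=
  [fsfun k' in finsupp q => if k <= k' then q k' else 0 | 0].

Definition Levels (q : expf) : set rat :=
  [set s | exists i : int, s = slope (subf q (sigmaz i q)) /\ s != 0].

Definition common_k (q qh : expf) : option rat :=
  ohead (sort <=%R [seq k <- finsupp q | `[< galois_orbit (tau k q) = galois_orbit (tau k qh) >] ]).

Definition qc (q qh : expf) : expf :=
  if common_k q qh is Some k then tau k q else zerof.
Definition qhc (q qh : expf) : expf :=
  if common_k q qh is Some k then tau k qh else zerof.

Definition fission (q qh : expf) : rat :=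
  Num.max (slope (subf q (qc q qh))) (slope (subf qh (qhc q qh))).

Definition compatible (q qh : expf) : Prop := qc q qh = qhc q qh.

End ExpFactors.

(* Main.v *)
Require Import Defs.
From HB Require Import structures.
From mathcomp Require Import all_boot all_order all_algebra.
From mathcomp Require Import finmap complex.
From mathcomp Require Import boolp classical_sets reals trigo.
From mathcomp Require Import ring lra.
Set Implicit Arguments. Unset Strict Implicit. Unset Printing Implicit Defensive.
Import Order.TTheory GRing.Theory Num.Theory.
Local Open Scope ring_scope.

Section S.
Variable R : realType.
Implicit Types (p q : expf R).

Lemma inE_supp p k : (k \in finsupp p) = (p k != 0).
Proof. by rewrite mem_finsupp. Qed.

Lemma subfE p q k : subf p q k = p k - q k.
Proof.
rewrite /subf fsfunE; case: ifP => // /negbT; rewrite inE negb_or !inE_supp !negbK.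
by move=> /andP[/eqP-> /eqP->]; rewrite subr0.
Qed.

Lemma zerofE k : zerof R k = 0.
Proof. by rewrite /zerof fsfunE. Qed.

Lemma sigmaE p k : sigma p k = expi (- (2 * pi * ratr k)) * p k.
Proof.
rewrite /sigma fsfunE; case: ifP => // /negbT; rewrite inE_supp negbK.
by move=> /eqP->; rewrite mulr0.
Qed.

Lemma sigma_invE p k : sigma_inv p k = expi (2 * pi * ratr k) * p k.
Proof.
rewrite /sigma_inv fsfunE; case: ifP => // /negbT; rewrite inE_supp negbK.
by move=> /eqP->; rewrite mulr0.
Qed.

Lemma tauE k0 p k : tau k0 p k = if k0 <= k then p k else 0.
Proof.
rewrite /tau fsfunE; case: ifP => // /negbT; rewrite inE_supp negbK.
by move=> /eqP->; case: ifP.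
Qed.

Lemma expiD (a b : R) : expi a * expi b = expi (a + b).
Proof. by rewrite /expi cosD sinD {1}/GRing.mul /= [sin a * _ + _]addrC. Qed.

Lemma expi0 : expi (0:R) = 1.
Proof. by rewrite /expi cos0 sin0. Qed.

Lemma expiMn (a : R) n : expi a ^+ n = expi (a *+ n).
Proof. elim: n => [|n IH]; first by rewrite expr0 mulr0n expi0.
by rewrite exprS IH expiD mulrS. Qed.

Lemma expi2pi : expi (pi *+ 2 : R) = 1.
Proof. by rewrite /expi cos2pi sin2pi. Qed.

Lemma expi_int (N : int) : expi ((pi *+ 2) * N%:~R : R) = 1.
Proof.
have E : forall m : nat, ((m:int)%:~R : R) = m%:R by [].
case: N => n.
  by rewrite E mulr_natr -expiMn expi2pi expr1n.
rewrite NegzE mulrN /expi cosN sinN mulr_natr.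
have := expiMn (pi *+ 2) n.+1; rewrite expi2pi expr1n /expi => /eqP.
by rewrite eq_complex /= => /andP[/eqP<- /eqP<-]; rewrite oppr0.
Qed.

Definition w (k : rat) : R[i] := expi (- (2 * pi * ratr k)).

Lemma w_inv k : w k * expi (2 * pi * ratr k) = 1.
Proof. by rewrite /w expiD addNr expi0. Qed.

Lemma w_neq0 k : w k != 0.
Proof. apply/negP => /eqP H; have := w_inv k; rewrite H mul0r => /eqP; rewrite eq_sym oner_eq0. done. Qed.

Lemma w_unit k : w k \is a GRing.unit.
Proof. by rewrite unitfE w_neq0. Qed.

Lemma sigmazE i p k : sigmaz i p k = w k ^ i * p k.
Proof.
case: i => n /=.
  elim: n => [|n IH]; first by rewrite expr0z mul1r.
  by rewrite iterS sigmaE IH -/(w k) mulrA -!exprnP exprS.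
have Hinv : expi (2 * pi * ratr k) = (w k)^-1.
  by rewrite -[RHS]mulr1 -(w_inv k) mulKf // w_neq0.
rewrite NegzE -exprz_inv.
have H : forall m, iter m (@sigma_inv R) p k = (w k)^-1 ^ m * p k.
  elim => [|m IH]; first by rewrite expr0z mul1r.
  by rewrite iterS sigma_invE IH Hinv mulrA -!exprnP exprS.
exact: (H n.+1).
Qed.

Lemma sigmaz_comp i j p : sigmaz i (sigmaz j p) = sigmaz (i + j) p.
Proof. by apply/fsfunP => k; rewrite !sigmazE mulrA -exprzDr // w_unit. Qed.

Lemma sigmaz0 p : sigmaz 0 p = p.
Proof. by []. Qed.

Lemma orbit_eq (A B : expf R) : galois_orbit A = galois_orbit B -> exists m, B = sigmaz m A.
Proof.
move=> H; have : galois_orbit A B by rewrite H; exists 0.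
by case=> m _ <-; exists m.
Qed.

Lemma orbit_of m (A B : expf R) : B = sigmaz m A -> galois_orbit A = galois_orbit B.
Proof.
move=> ->; apply/seteqP; split => x [i _ <-].
  by exists (i - m) => //; rewrite sigmaz_comp subrK.
by exists (i + m) => //; rewrite sigmaz_comp.
Qed.

Definition pos p := forall k, p k != 0 -> 0 < k.

Lemma posE p : is_expfactor p -> pos p.
Proof. by move=> H k Hk; apply: H; rewrite inE_supp. Qed.

Lemma pos_sub p q : pos p -> pos q -> pos (subf p q).
Proof.
move=> Hp Hq k; rewrite subfE; have [/Hp//|/negbNE/eqP->] := boolP (p k != 0).
by rewrite sub0r oppr_eq0; apply: Hq.
Qed.

Lemma pos_sigmaz i p : pos p -> pos (sigmaz i p).
Proof. by move=> Hp k; rewrite sigmazE mulf_eq0 negb_or => /andP[_ /Hp]. Qed.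

Lemma pos_tau k0 p : pos p -> pos (tau k0 p).
Proof. move=> Hp k; rewrite tauE; case: ifP => _; [exact: Hp k | by rewrite eqxx]. Qed.

Definition M (s : seq rat) := \big[Num.max/0]_(k <- s) k.

Lemma M_ge0 s : 0 <= M s.
Proof. by rewrite /M; elim: s => [|x s IH]; rewrite ?big_nil // big_cons le_max IH orbT. Qed.

Lemma M_ub s x : x \in s -> x <= M s.
Proof.
rewrite /M; elim: s => [|y s IH] //; rewrite inE big_cons le_max => /orP[/eqP->|/IH->].
  by rewrite lexx.
by rewrite orbT.
Qed.

Lemma M_in s : M s = 0 \/ M s \in s.
Proof.
rewrite /M; elim: s => [|y s IH]; rewrite ?big_nil ?big_cons; first by left.
rewrite maxEle; case: ifP => _; last by right; rewrite inE eqxx.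
by case: IH => [->|H]; [left|right; rewrite inE H orbT].
Qed.

Lemma slope_ge0 p : 0 <= slope p.
Proof. exact: M_ge0. Qed.

Lemma slope_ub p k : p k != 0 -> k <= slope p.
Proof. by rewrite -inE_supp; apply: M_ub. Qed.

Lemma slope_above p k : slope p < k -> p k = 0.
Proof. by move=> H; apply/eqP; apply: contraTT H => /slope_ub; rewrite -leNgt. Qed.

Lemma slope_nz p : slope p != 0 -> p (slope p) != 0.
Proof. change (M (finsupp p) != 0 -> p (M (finsupp p)) != 0).
by case: (M_in (finsupp p)) => [->|]; rewrite ?eqxx // inE_supp. Qed.

Lemma slope_0 p : pos p -> slope p = 0 -> forall k, p k = 0.
Proof.
move=> Hp H0 k; apply/eqP; apply/negP => /negP Hk.
by have := slope_ub Hk; rewrite H0 leNgt Hp.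
Qed.

Lemma slope_zero p : (forall k, p k = 0) -> slope p = 0.
Proof.
move=> H; apply/eqP; apply/negP => /negP /slope_nz; by rewrite H eqxx.
Qed.

Lemma slope_eq p s : pos p -> p s != 0 -> (forall k, s < k -> p k = 0) -> slope p = s.
Proof.
move=> Hp Hs Hab; apply/eqP; rewrite eq_le slope_ub // andbT.
have [->|Hn] := eqVneq (slope p) 0; first by apply/ltW/Hp.
rewrite leNgt; apply/negP => /Hab/eqP; by rewrite (negPf (slope_nz Hn)).
Qed.

Lemma slope_supp p p' : pos p -> (forall k, (p k == 0) = (p' k == 0)) -> slope p = slope p'.
Proof.
move=> Hp E.
have Hp' : pos p' by move=> k; rewrite -E; apply: Hp.
have [H0|Hn] := eqVneq (slope p) 0.
  rewrite H0 slope_zero // => k; apply/eqP; rewrite -E; apply/eqP; exact: slope_0 H0 k.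
apply/esym/slope_eq => //; first by rewrite -E; apply: slope_nz.
by move=> k /slope_above/eqP; rewrite E => /eqP.
Qed.

Lemma ohead_sort (s : seq rat) k : ohead (sort <=%R s) = Some k ->
  k \in s /\ forall x, x \in s -> k <= x.
Proof.
case E: (sort <=%R s) => [|y t] //= [<-].
have Hs := sort_sorted (@le_total _ rat) s; rewrite E /= in Hs.
have Ha := order_path_min (@le_trans _ rat) Hs.
split; first by rewrite -(mem_sort <=%R) E inE eqxx.
move=> x; rewrite -(mem_sort <=%R) E inE => /orP[/eqP->|xt]; first exact: lexx.
exact: (allP Ha).
Qed.

Lemma ohead_sort_none (s : seq rat) : ohead (sort <=%R s) = None -> s = [::].
Proof.
case E: (sort <=%R s) => [|y t] //= _.
by apply/eqP; rewrite -size_eq0 -(size_sort <=%R) E.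
Qed.

Lemma common_struct q qh : pos q -> pos qh -> exists K m, 0 < K /\
  (forall k, qc q qh k = if K <= k then q k else 0) /\
  (forall k, qhc q qh k = if K <= k then qh k else 0) /\
  qhc q qh = sigmaz m (qc q qh) /\
  (forall s, q s != 0 -> s < K -> galois_orbit (tau s q) <> galois_orbit (tau s qh)).
Proof.
move=> Hq Hqh; rewrite /qc /qhc; case E: (common_k q qh) => [k|].
  move: E; rewrite /common_k => /ohead_sort [Hk Hmin].
  move: Hk; rewrite mem_filter => /andP[/asboolP Horb Hkq].
  have [m Hm] := orbit_eq Horb.
  exists k, m; split; first by apply: Hq; rewrite -inE_supp.
  split; first by move=> k'; rewrite tauE.
  split; first by move=> k'; rewrite tauE.
  split; first by [].
  move=> s Hs Hsk Ho.
  have : s \in [seq k <- finsupp q | `[< galois_orbit (tau k q) = galois_orbit (tau k qh) >]].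
    by rewrite mem_filter inE_supp Hs andbT; apply/asboolP.
  by move/Hmin; rewrite leNgt Hsk.
move: E; rewrite /common_k => /ohead_sort_none Hnil.
have h1 := slope_ge0 q; have h2 := slope_ge0 qh.
exists (1 + slope q + slope qh), 0; split; first by lra.
split.
  move=> k; rewrite zerofE; case: ifP => // Hk; apply/esym/slope_above.
  move: Hk; lra.
split.
  move=> k; rewrite zerofE; case: ifP => // Hk; apply/esym/slope_above.
  move: Hk; lra.
split; first by [].
move=> s Hs _ Ho.
have : s \in [seq k <- finsupp q | `[< galois_orbit (tau k q) = galois_orbit (tau k qh) >]].
  by rewrite mem_filter inE_supp Hs andbT; apply/asboolP.
by rewrite Hnil.
Qed.

Lemma wz_neq0 k (i : int) : w k ^ i != 0.
Proof. exact/expfz_neq0/w_neq0. Qed.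

Lemma main_slope q qh K (Q Qh : expf R) :
 pos q -> pos qh -> 0 < K ->
 (forall k, Q k = if K <= k then q k else 0) ->
 (forall k, Qh k = if K <= k then qh k else 0) ->
 (forall s, q s != 0 -> s < K -> galois_orbit (tau s q) <> galois_orbit (tau s qh)) ->
 forall i j, slope (subf (sigmaz i q) (sigmaz j qh)) =
   if slope (subf (sigmaz i Q) (sigmaz j Qh)) == 0
   then Num.max (slope (subf q Q)) (slope (subf qh Qh))
   else slope (subf (sigmaz i Q) (sigmaz j Qh)).
Proof.
move=> Hq Hqh HK HQ HQh Hmin i j.
set D := subf (sigmaz i q) (sigmaz j qh).
set A := subf (sigmaz i Q) (sigmaz j Qh).
have HD : forall k, D k = w k ^ i * q k - w k ^ j * qh k by move=> k; rewrite subfE !sigmazE.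
have HA : forall k, A k = if K <= k then D k else 0.
  by move=> k; rewrite subfE !sigmazE HQ HQh HD; case: ifP => _; rewrite ?mulr0 ?subr0.
have posD : pos D by apply: pos_sub; apply: pos_sigmaz.
have posA : pos A.
  by move=> k; rewrite HA; case: ifP => _; [exact: posD k | rewrite eqxx].
case: eqP => [HA0|/eqP HAn]; last first.
  set a := slope A.
  have HAa : A a != 0 by apply: slope_nz.
  have HKa : K <= a by move: HAa; rewrite HA; case: ifP => //; rewrite eqxx.
  apply: slope_eq => //; first by move: HAa; rewrite HA HKa.
  move=> k Hk; have := slope_above Hk; rewrite -/a HA.
  by rewrite (le_trans HKa (ltW Hk)).
have Az := slope_0 posA HA0.
set r := subf q Q; set rh := subf qh Qh.
have Hr : forall k, r k = if K <= k then 0 else q k.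
  by move=> k; rewrite subfE HQ; case: ifP => _; rewrite ?subrr ?subr0.
have Hrh : forall k, rh k = if K <= k then 0 else qh k.
  by move=> k; rewrite subfE HQh; case: ifP => _; rewrite ?subrr ?subr0.
have HDr : forall k, D k = w k ^ i * r k - w k ^ j * rh k.
  move=> k; rewrite Hr Hrh; case: ifP => HKk; last by rewrite HD.
  by have := Az k; rewrite HA HKk => ->; rewrite !mulr0 subr0.
set s := Num.max (slope r) (slope rh).
have Hab : forall k, s < k -> D k = 0.
  move=> k Hk; rewrite HDr !slope_above ?mulr0 ?subr0 //.
    by apply: le_lt_trans Hk; rewrite le_max lexx orbT.
  by apply: le_lt_trans Hk; rewrite le_max lexx.
have [s0|sn0] := eqVneq s 0.
  rewrite s0; apply: slope_zero => k.
  have [Hk|Hk] := ltP 0 k; first by apply: Hab; rewrite s0.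
  by apply/eqP; apply: contraTT Hk => /posD; rewrite -ltNge.
apply: slope_eq => //.
have Hor : r s != 0 \/ rh s != 0.
  move: sn0; rewrite /s maxEle; case: ifP => _ H.
    by right; apply: slope_nz.
  by left; apply: slope_nz.
apply/negP => /eqP Ds0.
move: (Ds0); rewrite HDr => /eqP; rewrite subr_eq0 => /eqP Heq.
have Hrs : r s != 0.
  case: Hor => // H; apply/negP => /eqP H0; move: Heq; rewrite H0 mulr0 => /esym/eqP.
  by rewrite mulf_eq0 (negPf (wz_neq0 _ _)) (negPf H).
have HsK : s < K by move: Hrs; rewrite Hr; case: ifP => [_|/negbT]; rewrite ?eqxx // -ltNge.
have Hqs : q s != 0 by move: Hrs; rewrite Hr; case: ifP => // HH; move: HsK; rewrite ltNge HH.
apply: (Hmin s Hqs HsK); apply: (orbit_of (m := i - j)).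
apply/fsfunP => k; rewrite sigmazE !tauE; case: ifP => Hsk; last by rewrite mulr0.
have HDk : D k = 0.
  move: Hsk; rewrite le_eqVlt => /orP[/eqP<- //|]; exact: Hab.
move: HDk; rewrite HD => /eqP; rewrite subr_eq0 => /eqP Hk.
apply: (mulfI (wz_neq0 k j)); rewrite -Hk mulrA -exprzDr ?w_unit //.
by rewrite addrC subrK.
Qed.

Lemma ram_exists (s : seq rat) : exists r : nat, (0 < r)%N /\
  forall k, k \in s -> k * r%:R \is a Num.int.
Proof.
elim: s => [|x s [r [Hr IH]]]; first by exists 1%N.
have Hd : ((`|denq x|)%N%:R : rat) = (denq x)%:~R.
  by rewrite natr_absz ger0_norm // ltW // denq_gt0.
exists (r * `|denq x|)%N; split; first by rewrite muln_gt0 Hr absz_gt0 denq_neq0.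
move=> k; rewrite inE => /orP[/eqP->|Hk].
  by rewrite natrM Hd mulrC -mulrA [_ * x]mulrC -numqE rpredM // ?intr_int // rpred_nat.
by rewrite natrM mulrA rpredM // ?IH // rpred_nat.
Qed.

Lemma ram_spec q : pos q -> (0 < ramification q)%N /\
  forall k, q k != 0 -> w k ^+ ramification q = 1.
Proof.
move=> Hq.
have Hex : exists r, ramification_ok q r.
  have [r [Hr H]] := ram_exists (finsupp q).
  exists r; rewrite /ramification_ok Hr /=; apply/allP => k Hk.
  by rewrite H // andbT; apply: Hq; rewrite -inE_supp.
rewrite /ramification; case: pselect => // h; case: ex_minnP => r /andP[Hr Hall] _.
split => // k Hk.
have Hk' : k \in finsupp q by rewrite inE_supp.
have /andP[_ /intrP[N HN]] := allP Hall k Hk'.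
have e : ratr k * r%:R = N%:~R :> R by rewrite -ratr_nat -rmorphM /= HN ratr_int.
rewrite /w expiMn.
have -> : - (2 * pi * ratr k) *+ r = ((pi : R) *+ 2) * (- N)%:~R.
  by rewrite -mulr_natr mulrNz -e; ring.
exact: expi_int.
Qed.

Lemma gcoef P n k : subf P (sigmaz n P) k = (1 - w k ^ n) * P k.
Proof. by rewrite subfE sigmazE mulrBl mul1r. Qed.

Lemma slope_shift P a b : pos P ->
  slope (subf (sigmaz a P) (sigmaz b P)) = slope (subf P (sigmaz (b - a) P)).
Proof.
move=> HP; apply: slope_supp; first by apply: pos_sub; apply: pos_sigmaz.
move=> k; rewrite gcoef subfE !sigmazE.
have -> : w k ^ b = w k ^ a * w k ^ (b - a) by rewrite -exprzDr ?w_unit // addrC subrK.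
by rewrite -mulrA -mulrBr mulf_eq0 (negPf (wz_neq0 _ _)) /= mulrBl mul1r.
Qed.

Lemma levels_le P P' : pos P -> pos P' -> (forall l, Levels P l -> Levels P' l) ->
  forall n, slope (subf P (sigmaz n P)) <= slope (subf P' (sigmaz n P')).
Proof.
move=> HP HP' Hsub n.
set l := slope (subf P (sigmaz n P)).
have [l0|ln0] := eqVneq l 0; first by rewrite l0 slope_ge0.
have := slope_nz ln0; rewrite -/l gcoef mulf_eq0 negb_or => /andP[Hw HPl].
have [t [Ht Htn]] : Levels P' l by apply: Hsub; exists n.
have HP'l : P' l != 0.
  have := slope_nz (p := subf P' (sigmaz t P')); rewrite -Ht => /(_ Htn).
  by rewrite gcoef mulf_eq0 negb_or => /andP[].
by apply: slope_ub; rewrite gcoef mulf_neq0.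
Qed.

Lemma g0 (P : expf R) : slope (subf P (sigmaz 0 P)) = 0.
Proof. by apply: slope_zero => k; rewrite subfE subrr. Qed.

Lemma g_period (P : expf R) (r : nat) n t : pos P -> (forall k, P k != 0 -> w k ^+ r = 1) ->
  slope (subf P (sigmaz (n + t * r%:Z) P)) = slope (subf P (sigmaz n P)).
Proof.
move=> HP Hw; apply: slope_supp; first by apply: pos_sub => //; apply: pos_sigmaz.
move=> k; rewrite !gcoef; have [HPk|HPk] := eqVneq (P k) 0; first by rewrite HPk !mulr0.
by rewrite exprzDr ?w_unit // [t * _]mulrC -exprz_exp -exprnP Hw // exp1rz mulr1.
Qed.

Lemma g_geK (P : expf R) q K n : (forall k, P k = if K <= k then q k else 0) ->
  slope (subf P (sigmaz n P)) != 0 -> K <= slope (subf P (sigmaz n P)).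
Proof.
move=> HP /slope_nz; rewrite gcoef mulf_eq0 negb_or => /andP[_].
by rewrite HP; case: ifP => //; rewrite eqxx.
Qed.

Lemma rem_lt q (Q : expf R) K : 0 < K -> (forall k, Q k = if K <= k then q k else 0) ->
  slope (subf q Q) < K.
Proof.
move=> HK HQ; have [->//|Hn] := eqVneq (slope (subf q Q)) 0.
have := slope_nz Hn; rewrite subfE HQ; case: ifP => [_|/negbT]; first by rewrite subrr eqxx.
by rewrite -ltNge.
Qed.

Lemma pos_trunc q (Q : expf R) K : pos q -> (forall k, Q k = if K <= k then q k else 0) -> pos Q.
Proof. by move=> Hq HQ k; rewrite HQ; case: ifP => _; [exact: Hq k | rewrite eqxx]. Qed.
End S.

Unset Implicit Arguments.
Local Open Scope classical_set_scope.

Theorem mainTheorem4 (R : realType) (q qh : expf R) :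
  is_expfactor q -> is_expfactor qh -> galois_orbit q <> galois_orbit qh ->
  ([set s : rat | exists i j : nat, (i < ramification q)%N /\ (j < ramification qh)%N /\
       s = slope (subf (sigmaz (Posz i) q) (sigmaz (Posz j) qh)) /\ s != 0]
     = Levels (qc q qh) `|` [set fission q qh]
   /\ ~ Levels (qc q qh) (fission q qh))
  /\
  (compatible q qh ->
   forall q' qh' : expf R,
     is_expfactor q' -> is_expfactor qh' -> galois_orbit q' <> galois_orbit qh' ->
     compatible q' qh' ->
     Levels (qc q' qh') = Levels (qc q qh) ->
     fission q' qh' = fission q qh ->
     forall i j : int,
       slope (subf (sigmaz i q') (sigmaz j qh')) = slope (subf (sigmaz i q) (sigmaz j qh))).
Proof.
move=> Hq0 Hqh0 Hdist; have Hq := posE Hq0; have Hqh := posE Hqh0.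
have [K [m [HK [HQ [HQh [Hm Hmin]]]]]] := common_struct Hq Hqh.
have HPQ := pos_trunc Hq HQ.
have Hms := main_slope Hq Hqh HK HQ HQh Hmin.
rewrite -/(fission q qh) in Hms.
set Q := qc q qh in HQ HQh Hm HPQ Hms *.
set f := fission q qh in Hms *.
have Hmain : forall i j, slope (subf (sigmaz i q) (sigmaz j qh)) =
   if slope (subf Q (sigmaz (j + m - i) Q)) == 0 then f
   else slope (subf Q (sigmaz (j + m - i) Q)).
  by move=> i j; rewrite Hms Hm sigmaz_comp slope_shift.
have Hf0 : f != 0.
  apply/negP => /eqP f0.
  have h1 : slope (subf q Q) = 0.
    apply/eqP; rewrite eq_le slope_ge0 andbT -f0 /f /fission le_max lexx //.
  have h2 : slope (subf qh (qhc q qh)) = 0.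
    apply/eqP; rewrite eq_le slope_ge0 andbT -f0 /f /fission le_max lexx orbT //.
  have e1 : q = Q.
    apply/fsfunP => k; apply/eqP; rewrite -subr_eq0 -subfE.
    by apply/eqP; apply: (slope_0 _ h1); apply: pos_sub.
  have e2 : qh = qhc q qh.
    apply/fsfunP => k; apply/eqP; rewrite -subr_eq0 -subfE.
    by apply/eqP; apply: (slope_0 _ h2); apply: pos_sub => //; apply: pos_trunc HQh.
  by apply: Hdist; apply: (orbit_of (m := m)); rewrite e2 Hm -e1.
have HfK : f < K.
  by rewrite /f /fission gt_max (rem_lt HK HQ) (rem_lt HK HQh).
have HgK : forall n, slope (subf Q (sigmaz n Q)) != 0 -> K <= slope (subf Q (sigmaz n Q)).
  by move=> n; apply: g_geK HQ.
have [Hr0 Hrw] := ram_spec Hq.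
have [Hrh0 _] := ram_spec Hqh.
set r := ramification q in Hr0 Hrw *.
have Hper : forall n t, slope (subf Q (sigmaz (n + t * r%:Z) Q)) = slope (subf Q (sigmaz n Q)).
  move=> n t; apply: g_period => // k; rewrite HQ; case: ifP => _; last by rewrite eqxx.
  exact: Hrw.
split.
  split.
    apply/seteqP; split.
      move=> x [i [j [Hi [Hj [-> Hx]]]]]; move: Hx; rewrite Hmain.
      case: ifP => [_ _|/negbT Hg _]; first by right.
      by left; exists (Posz j + m - Posz i).
    move=> x [[n [-> Hn]] | ->].
      have rpos : (0 < r%:Z)%R by [].
      set e := ((m - n) %% r%:Z)%Z.
      have e0 : (0 <= e)%R by apply: modz_ge0; rewrite -lt0n.
      exists `|e|%N, 0%N; split; first by rewrite -ltz_nat gez0_abs // ltz_pmod.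
      split => //; split => //.
      rewrite Hmain gez0_abs //.
      have -> : (0%N:int) + m - e = n + ((m - n) %/ r%:Z)%Z * r%:Z.
        have HE := divz_eq (m - n) r%:Z; rewrite -/e in HE.
        set d := ((m - n) %/ r%:Z)%Z in HE *.
        rewrite -{1}[m](subrK n) HE; ring.
      by rewrite Hper (negPf Hn).
    have rpos : (0 < r%:Z)%R by [].
    set e := (m %% r%:Z)%Z.
    have e0 : (0 <= e)%R by apply: modz_ge0; rewrite -lt0n.
    exists `|e|%N, 0%N; split; first by rewrite -ltz_nat gez0_abs // ltz_pmod.
    split => //; split => //.
    rewrite Hmain gez0_abs //.
    have -> : (0%N:int) + m - e = 0 + (m %/ r%:Z)%Z * r%:Z.
      have HE := divz_eq m r%:Z; rewrite -/e in HE.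
      set d := (m %/ r%:Z)%Z in HE *.
      rewrite {1}HE; ring.
    by rewrite Hper g0 eqxx.
  move=> [n [Hfn Hn]].
  have := HgK n; rewrite -Hfn => /(_ Hn); by rewrite leNgt HfK.
move=> Hc q' qh' Hq'0 Hqh'0 Hdist' Hc' HL Hf' i j.
have Hq' := posE Hq'0; have Hqh' := posE Hqh'0.
have [K' [m' [HK' [HQ' [HQh' [Hm' Hmin']]]]]] := common_struct Hq' Hqh'.
have HPQ' := pos_trunc Hq' HQ'.
have Hms' := main_slope Hq' Hqh' HK' HQ' HQh' Hmin'.
rewrite -/(fission q' qh') in Hms'.
rewrite Hms Hms' -/f Hf'.
rewrite /compatible in Hc Hc'; rewrite -Hc -Hc' !slope_shift //.
have -> : slope (subf (qc q' qh') (sigmaz (j - i) (qc q' qh'))) = slope (subf Q (sigmaz (j - i) Q)) => //.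
apply/eqP; rewrite eq_le !levels_le // => l; by rewrite HL.
Qed.
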